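(* Let $G=(V,E,w)$ be an undirected graph with non-negative edge weights, $\mathcal L\subseteq V$ a set of labeled vertices and $k\ge1$. For every $v\in V$ let $\mathcal L_v$ be the set of labeled vertices in the connected component of $v$ and $\ell_v=\min\{k,|\mathcal L_v|\}$. Then (1) Algorithm 1 (described in the context) stops after a finite number of steps; (2) once it stops, for every $v\in V$ the output list is $\mathrm{kNN}[v]=[(d_G(s_1,v),s_1),\dots,(d_G(s_{\ell_v},v),s_{\ell_v})]$, where $s_1,\dots,s_{\ell_v}$ are the $\ell_v$ nearest labeled vertices to $v$, sorted by their distance to $v$.
   Context: $d_G$ is the shortest-path distance in $G$. Algorithm 1: it maintains a min-priority queue $Q$ of pairs $(\mathrm{seed},v)\in\mathcal L\times V$ with priorities, and for each $v\in V$ a list kNN$[v]$ (initially empty) and a set $S_v$ (initially empty). Initially, for each $s\in\mathcal L$, $(s,s)$ is inserted with priority $0$. While $Q$ is nonempty: pop the pair $(\mathrm{seed},v_0)$ of minimum priority $\mathrm{dist}$; add $\mathrm{seed}$ to $S_{v_0}$; if kNN$[v_0]$ has fewer than $k$ entries, append $(\mathrm{dist},\mathrm{seed})$ to kNN$[v_0]$ and, for every neighbour $v$ of $v_0$ such that kNN$[v]$ has fewer than $k$ entries and $\mathrm{seed}\notin S_v$, perform decrease-or-insert of $(\mathrm{seed},v)$ with priority $\mathrm{dist}+w(v_0,v)$ (if the pair is in $Q$ its priority is lowered to this value when smaller; otherwise it is inserted). *)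

(* Defs.v *)
From mathcomp Require Import all_boot all_order all_algebra.
From mathcomp Require Import reals.

Set Implicit Arguments.
Unset Strict Implicit.
Unset Printing Implicit Defensive.

Import Order.TTheory GRing.Theory Num.Theory.
Local Open Scope ring_scope.

(* A finite undirected weighted graph is given by a vertex type V : finType,
   a symmetric adjacency relation [adj] and a weight function [w]
   (only its values on edges matter). *)

Section KNN.
Variables (V : finType) (R : realType).
Variables (adj : rel V) (w : V -> V -> R) (L : {set V}) (k : nat).

Fixpoint walk_weight (x : V) (p : seq V) : R :=
  match p with
  | [::] => 0
  | y :: p' => w x y + walk_weight y p'
  end.

Definition is_walk (s v : V) (p : seq V) : bool := path adj s p && (last s p == v).

Definition is_dist (s v : V) (d : R) : Prop :=
  (exists2 p, is_walk s v p & walk_weight s p = d) /\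
  (forall p, is_walk s v p -> d <= walk_weight s p).

Definition Lcomp (v : V) : {set V} := [set s in L | connect adj s v].

(* State of Algorithm 1:
   Q seed v = Some p  iff the pair (seed, v) is in the queue with priority p;
   kNN v is the list kNN[v]; S v is the set S_v. *)
Record state := St {
  Q : V -> V -> option R;
  kNN : V -> seq (R * V);
  S : V -> {set V}
}.

Definition init : state :=
  St (fun s v => if (s == v) && (s \in L) then Some 0 else None)
     (fun _ => [::]) (fun _ => set0).

Definition pop_update (st : state) (seed v0 : V) (dist : R) : state :=
  let Q1 := fun s v => if (s == seed) && (v == v0) then None else Q st s v in
  let S1 := fun v => if v == v0 then seed |: S st v else S st v in
  if (size (kNN st v0) < k)%N then
    let K1 := fun v => if v == v0 then rcons (kNN st v) (dist, seed)
                       else kNN st v in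
    let Q2 := fun s v =>
      if [&& s == seed, adj v0 v, (size (K1 v) < k)%N & seed \notin S1 v] then
        Some (match Q1 s v with
              | Some p => Num.min p (dist + w v0 v)
              | None => dist + w v0 v
              end)
      else Q1 s v in
    St Q2 K1 S1
  else St Q1 (kNN st) S1.

(* One iteration: pop a pair of minimum priority (ties broken arbitrarily). *)
Definition step (st st' : state) : Prop :=
  exists seed v0 dist,
    [/\ Q st seed v0 = Some dist,
        (forall s v d, Q st s v = Some d -> dist <= d) &
        st' = pop_update st seed v0 dist].

Inductive reachable : state -> Prop :=
  | reach_init : reachable init
  | reach_step st st' : reachable st -> step st st' -> reachable st'.

Definition queue_empty (st : state) : Prop := forall s v, Q st s v = None.

Definition knn_correct (v : V) (l : seq (R * V)) : Prop :=
  [/\ size l = minn k #|Lcomp v|,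
      uniq (map snd l),
      (forall x, x \in l -> x.2 \in Lcomp v /\ is_dist x.2 v x.1),
      sorted (fun a b : R * V => a.1 <= b.1) l &
      (forall s d, s \in Lcomp v -> s \notin map snd l -> is_dist s v d ->
         forall x, x \in l -> x.1 <= d)].

End KNN.

(* Main.v *)
Require Import Defs.
From mathcomp Require Import all_boot all_order all_algebra.
From mathcomp Require Import reals.
From mathcomp Require Import zify.
Import Order.TTheory GRing.Theory Num.Theory.
Local Open Scope ring_scope.

Set Implicit Arguments.
Unset Strict Implicit.
Unset Printing Implicit Defensive.

Section Proof.
Variables (V : finType) (R : realType) (adj : rel V) (w : V -> V -> R)
  (L : {set V}) (k : nat).
Hypothesis w_ge0 : forall x y, adj x y -> 0 <= w x y.

Definition full (st : state V R) v := (k <= size (kNN st v))%N.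

Definition good (st : state V R) s v W :=
  (exists2 p, (p, s) \in kNN st v & p <= W) \/
  (full st v /\ forall e, e \in kNN st v -> e.1 <= W) \/
  (exists2 q, Q st s v = Some q & q <= W).

Definition inv1 (st : state V R) :=
 [/\ (forall u e s v q, e \in kNN st u -> Q st s v = Some q -> e.1 <= q),
     (forall v, (size (kNN st v) <= k)%N /\ uniq (map snd (kNN st v)) /\
                sorted (fun a b : R * V => a.1 <= b.1) (kNN st v)),
     (forall s v q, Q st s v = Some q -> s \notin S st v),
     (forall s v q, Q st s v = Some q -> s \in L /\
          exists2 p, is_walk adj s v p & walk_weight w s p = q) &
     (forall v e, e \in kNN st v -> e.2 \in L /\
          exists2 p, is_walk adj e.2 v p & walk_weight w e.2 p = e.1)].

Definition inv2 (st : state V R) :=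
 [/\ (forall u p s v, (p, s) \in kNN st u -> adj u v -> good st s v (p + w u v)),
     (forall s, s \in L -> good st s s 0),
     (forall s v, s \in S st v -> s \in map snd (kNN st v) \/ full st v) &
     (forall s v, s \in map snd (kNN st v) -> s \in S st v)].

Definition inv st := inv1 st /\ inv2 st.

Lemma walk_weight_rcons x p y :
  walk_weight w x (rcons p y) = walk_weight w x p + w (last x p) y.
Proof.
elim: p x => [|z p IH] x /=; first by rewrite addr0 add0r.
by rewrite IH addrA.
Qed.

Lemma is_walk_rcons s v p y : is_walk adj s v p -> adj v y ->
  is_walk adj s y (rcons p y).
Proof.
rewrite /is_walk => /andP[Hp /eqP Hl] Hy.
by rewrite rcons_path Hp Hl Hy last_rcons eqxx.
Qed.

Lemma inv_init : inv (init R L).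
Proof.
split; split => //=.
- by move=> s v q _; rewrite in_set0.
- move=> s v q; case: ifP => // /andP[/eqP <- sL] [<-].
  by split => //; exists [::]; rewrite /is_walk /= ?eqxx.
- move=> s sL; right; right; exists 0 => //.
  by rewrite /= eqxx sL.
- by move=> s v; rewrite in_set0.
Qed.

Section StepFacts.
Variables (st : state V R) (seed v0 : V) (dist : R).
Hypothesis Hq : Q st seed v0 = Some dist.
Hypothesis Hmin : forall s v d, Q st s v = Some d -> dist <= d.
Hypothesis Hinv : inv st.
Let st' := pop_update adj w k st seed v0 dist.

Lemma K_nv0 v : v != v0 -> kNN st' v = kNN st v.
Proof. by move=> /negbTE Hv; rewrite /st' /pop_update; case: ifP => _ //=; rewrite Hv. Qed.

Lemma K_v0 : (size (kNN st v0) < k)%N -> kNN st' v0 = rcons (kNN st v0) (dist, seed).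
Proof. by move=> Hs; rewrite /st' /pop_update Hs /= eqxx. Qed.

Lemma K_nfull : ~~ (size (kNN st v0) < k)%N -> kNN st' = kNN st.
Proof. by move=> /negbTE Hs; rewrite /st' /pop_update Hs. Qed.

Lemma K_sub v e : e \in kNN st v -> e \in kNN st' v.
Proof.
case: (eqVneq v v0) => [->|Hv]; last by rewrite K_nv0.
case Hs: (size (kNN st v0) < k)%N; last by rewrite K_nfull ?Hs.
by rewrite K_v0 // mem_rcons inE => ->; rewrite orbT.
Qed.

Lemma K_char v e : e \in kNN st' v -> e \in kNN st v \/
  [/\ v = v0, e = (dist, seed) & (size (kNN st v0) < k)%N].
Proof.
case: (eqVneq v v0) => [->|Hv]; last by rewrite K_nv0 // => H; left.
case Hs: (size (kNN st v0) < k)%N; last by rewrite K_nfull ?Hs // => H; left.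
rewrite K_v0 // mem_rcons inE => /orP[/eqP He|He]; last by left.
by right; split.
Qed.

Lemma K_full v : full st v -> kNN st' v = kNN st v.
Proof.
case: (eqVneq v v0) => [->|Hv]; last by rewrite K_nv0.
rewrite /full => Hf; rewrite K_nfull // -leqNgt //.
Qed.

Lemma S_eq v : S st' v = if v == v0 then seed |: S st v else S st v.
Proof. by rewrite /st' /pop_update; case: ifP. Qed.

Lemma Q_eq s v : Q st' s v =
  if (size (kNN st v0) < k)%N && [&& s == seed, adj v0 v, (size (kNN st' v) < k)%N
         & seed \notin S st' v] then
    Some (match (if (s == seed) && (v == v0) then None else Q st s v) with
          | Some p => Num.min p (dist + w v0 v)
          | None => dist + w v0 v end)
  else if (s == seed) && (v == v0) then None else Q st s v.
Proof. by rewrite /st' /pop_update; case: ifP. Qed.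

Lemma Q_le s v q : Q st' s v = Some q -> dist <= q.
Proof.
rewrite Q_eq; case: ifP => [/andP[Hs /and4P[/eqP -> Ha _ _]] [<-] | _].
  case: ifP => _; last case E: (Q st seed v) => [p|].
  - by rewrite lerDl w_ge0.
  - by rewrite le_min lerDl w_ge0 // (Hmin E).
  - by rewrite lerDl w_ge0.
by case: ifP => // _; apply: Hmin.
Qed.

Lemma Q_notS s v q : Q st' s v = Some q -> s \notin S st' v.
Proof.
case: Hinv => [[I1 I2 I3 I4 I5] _].
rewrite Q_eq; case: ifP => [/andP[_ /and4P[/eqP -> _ _ H]] _ // | _].
case: ifP => // Hsv /I3 HS; rewrite S_eq; case: ifP => // /eqP Ev.
rewrite in_setU1 negb_or HS andbT; apply: contraFN Hsv => ->.
by rewrite Ev eqxx.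
Qed.

Lemma Q_walk s v q : Q st' s v = Some q -> s \in L /\
   exists2 p, is_walk adj s v p & walk_weight w s p = q.
Proof.
case: Hinv => [[I1 I2 I3 I4 I5] _].
have [sL [p0 Hp0 Wp0]] := I4 _ _ _ Hq.
have Hnew : adj v0 v -> seed \in L /\
   exists2 p, is_walk adj seed v p & walk_weight w seed p = dist + w v0 v.
  move=> Ha; split => //; exists (rcons p0 v); first exact: is_walk_rcons Hp0 Ha.
  by rewrite walk_weight_rcons Wp0; case/andP: Hp0 => _ /eqP ->.
rewrite Q_eq; case: ifP => [/andP[Hs /and4P[/eqP -> Ha _ _]] [<-] | _].
  case: ifP => _; last case E: (Q st seed v) => [p|].
  - exact: Hnew.
  - by rewrite minEle; case: ifP => _; [apply: I4 E | apply: Hnew].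
  - exact: Hnew.
by case: ifP => // _; apply: I4.
Qed.

Lemma Q_keep s v q : Q st s v = Some q -> (s != seed) || (v != v0) ->
  exists2 q', Q st' s v = Some q' & q' <= q.
Proof.
move=> E; rewrite -negb_and => /negbTE Hsv.
rewrite Q_eq Hsv E; case: ifP => _; last by exists q.
by exists (Num.min q (dist + w v0 v)); rewrite // ge_min lexx.
Qed.

Lemma Q_new v : (size (kNN st v0) < k)%N -> adj v0 v ->
  (size (kNN st' v) < k)%N -> seed \notin S st' v ->
  exists2 q', Q st' seed v = Some q' & q' <= dist + w v0 v.
Proof.
move=> Hs Ha Hsz HS; rewrite Q_eq Hs eqxx Ha Hsz HS /=.
eexists; first reflexivity.
case: ifP => _; last case: (Q st seed v) => [p|]; by rewrite ?ge_min lexx ?orbT.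
Qed.

Lemma Kle u e : e \in kNN st' u -> e.1 <= dist.
Proof.
case: Hinv => [[I1 I2 I3 I4 I5] _].
by case/K_char => [He|[_ -> _]] //; apply: I1 He Hq.
Qed.

Lemma good_mono s v W : good st s v W -> good st' s v W.
Proof.
case: Hinv => [[I1 I2 I3 I4 I5] _].
case=> [[p Hp HW]|[[Hf HW]|[q Eq HW]]].
- by left; exists p => //; apply: K_sub.
- by right; left; rewrite /full K_full //; split.
case: (boolP ((s != seed) || (v != v0))) => Hsv.
  by have [q' E' Hq'] := Q_keep Eq Hsv; right; right; exists q' => //; apply: le_trans HW.
move: Hsv; rewrite negb_or !negbK => /andP[/eqP Es /eqP Ev]; subst s v.
move: Eq; rewrite Hq => -[Eq]; subst q.
case Hs: (size (kNN st v0) < k)%N.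
  by left; exists dist => //; rewrite K_v0 // mem_rcons inE eqxx.
right; left; rewrite /full K_nfull ?Hs // leqNgt Hs; split => // e He.
exact: le_trans (I1 _ _ _ _ _ He Hq) HW.
Qed.

Lemma sorted_rcons_le (l : seq (R * V)) x :
  sorted (fun a b : R * V => a.1 <= b.1) l -> (forall e, e \in l -> e.1 <= x.1) ->
  sorted (fun a b : R * V => a.1 <= b.1) (rcons l x).
Proof.
case: l => [|y l] //= Hs Hle.
rewrite rcons_path Hs /=; apply: Hle; exact: mem_last.
Qed.

Lemma inv_st' : inv st'.
Proof.
case: Hinv => [[I1 I2 I3 I4 I5] [I6 I7 I8 I9]].
have seedS : seed \notin S st v0 by apply: I3 Hq.
have S_sub v s : s \in S st v -> s \in S st' v.
  by rewrite S_eq; case: ifP => // _ H; rewrite in_setU1 H orbT.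
split; split.
- by move=> u e s v q /Kle H /Q_le H'; apply: le_trans H H'.
- move=> v; case: (eqVneq v v0) => [->|Hv]; last by rewrite K_nv0 //; apply: I2.
  case Hs: (size (kNN st v0) < k)%N; last by rewrite K_nfull ?Hs //; apply: I2.
  have [_ [Hu Hso]] := I2 v0.
  rewrite K_v0 // size_rcons Hs map_rcons rcons_uniq Hu andbT; split => //; split.
    by apply: contra seedS => /I9.
  by apply: sorted_rcons_le => // e He; apply: I1 He Hq.
- exact: Q_notS.
- exact: Q_walk.
- move=> v e /K_char [He|[Ev -> _]]; first exact: I5.
  by rewrite Ev; exact: (I4 seed v0 dist Hq).
- move=> u p s v /K_char [He Ha|[-> [-> ->] Hs Ha]].
    exact/good_mono/I6.
  case: (eqVneq v v0) => [Ev|Hv].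
    by left; exists dist; rewrite ?lerDl ?w_ge0 // Ev K_v0 // mem_rcons inE eqxx.
  have Hdw : dist <= dist + w v0 v by rewrite lerDl w_ge0.
  case Hf: (full st' v).
    right; left; split => // e /Kle He; exact: le_trans He Hdw.
  case HS: (seed \in S st v).
    case: (I8 _ _ HS) => [/mapP[[p' s'] Hp' /= Es]|Hf'].
      left; exists p'; first by rewrite Es; apply: K_sub.
      by apply: le_trans Hdw; apply: (I1 _ _ _ _ _ Hp' Hq).
    by move: Hf; rewrite /full K_full // => Hf2; move: Hf'; rewrite /full Hf2.
  right; right; apply: Q_new => //.
    by rewrite ltnNge; move: Hf; rewrite /full => ->.
  by rewrite S_eq (negbTE Hv) HS.
- by move=> s sL; apply/good_mono/I7.
- move=> s v; rewrite S_eq; case: (eqVneq v v0) => [->|Hv].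
    rewrite in_setU1 => /orP[/eqP ->|H].
      case Hs: (size (kNN st v0) < k)%N.
        by left; rewrite K_v0 // map_rcons mem_rcons inE eqxx.
      by right; rewrite /full K_nfull ?Hs // leqNgt Hs.
    case: (I8 _ _ H) => [H'|Hf]; last by right; rewrite /full K_full.
    by left; apply/mapP; case/mapP: H' => e He ->; exists e => //; apply: K_sub.
  move=> H; case: (I8 _ _ H) => [H'|Hf]; last by right; rewrite /full K_full.
  by left; apply/mapP; case/mapP: H' => e He ->; exists e => //; apply: K_sub.
- move=> s v /mapP[e /K_char [He|[-> -> _]] ->].
    by apply: S_sub; apply: I9; apply: map_f.
  by rewrite S_eq eqxx in_setU1 eqxx.
Qed.

End StepFacts.

Lemma reach_inv st : reachable adj w L k st -> inv st.
Proof.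
elim=> [|st1 st2 _ IH [seed [v0 [dist [Hq Hmin ->]]]]]; first exact: inv_init.
exact: inv_st'.
Qed.

Definition meas (st : state V R) := #|[set x : V * V | x.1 \notin S st x.2]|.

Lemma step_dec st st' : inv st -> step adj w k st st' -> (meas st' < meas st)%N.
Proof.
move=> Hinv [seed [v0 [dist [Hq Hmin ->]]]].
case: (Hinv) => [[I1 I2 I3 I4 I5] _].
apply: proper_card; apply/properP; split.
  apply/subsetP => -[s v]; rewrite !inE /=; apply: contra.
  by rewrite S_eq; case: ifP => // _ H; rewrite in_setU1 H orbT.
exists (seed, v0); rewrite !inE /=; first exact: I3 Hq.
by rewrite S_eq eqxx setU11.
Qed.

Lemma no_infinite (f : nat -> state V R) :
  f 0%N = init R L -> (forall n, step adj w k (f n) (f n.+1)) -> False.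
Proof.
move=> H0 Hs.
have Hr : forall n, reachable adj w L k (f n).
  elim=> [|n IH]; first by rewrite H0; constructor.
  exact: reach_step IH (Hs n).
have Hm : forall n, (meas (f n) + n <= meas (f 0%N))%N.
  elim=> [|n IH]; first by rewrite addn0.
  apply: leq_trans IH; rewrite addnS ltn_add2r.
  exact: step_dec (reach_inv (Hr n)) (Hs n).
by have := Hm (meas (f 0%N)).+1; rewrite addnS ltnNge leq_addl.
Qed.

Lemma uniq_snd (l : seq (R * V)) a b : uniq (map snd l) -> a \in l -> b \in l ->
  a.2 = b.2 -> a = b.
Proof.
elim: l => [|c l IH] //= /andP[Hc Hu]; rewrite !inE.
case/orP=> [/eqP ->|Ha]; case/orP=> [/eqP ->|Hb] // E.
- by move: Hc; rewrite E (map_f snd Hb).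
- by move: Hc; rewrite -E (map_f snd Ha).
- exact: IH.
Qed.

Section Final.
Variable st : state V R.
Hypothesis Hinv : inv st.
Hypothesis Hemp : queue_empty st.

Definition goodF s v W :=
  (exists2 p, (p, s) \in kNN st v & p <= W) \/
  (full st v /\ forall e, e \in kNN st v -> e.1 <= W).

Lemma goodF_of s v W : good st s v W -> goodF s v W.
Proof. by case=> [H|[H|[q]]]; [left|right|rewrite Hemp]. Qed.

Lemma goodF_le s v W1 W2 : goodF s v W1 -> W1 <= W2 -> goodF s v W2.
Proof.
move=> [[p Hp H]|[Hf H]] Hle; [left; exists p|right; split] => //.
  exact: le_trans Hle.
by move=> e /H He; apply: le_trans Hle.
Qed.

Lemma goodF_ext s u v W : goodF s u W -> adj u v -> goodF s v (W + w u v).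
Proof.
case: Hinv => [[I1 I2 I3 I4 I5] [I6 I7 I8 I9]].
move=> [[p Hp HW] Ha|[Hf HW] Ha].
  by apply: goodF_le (goodF_of (I6 _ _ _ _ Hp Ha)) _; rewrite lerD2r.
set W' := W + w u v.
case E: (full st v && all (fun e : R * V => e.1 <= W') (kNN st v)).
  by case/andP: E => H1 /allP H2; right.
have Hin : forall e, e \in kNN st u -> exists2 p, (p, e.2) \in kNN st v & p <= W'.
  move=> [p t] He.
  have := goodF_le (goodF_of (I6 _ _ _ _ He Ha)) (_ : _ <= W').
  case; first by rewrite lerD2r; apply: (HW _ He).
  - by [].
  - by move=> [H1 H2]; move: E; rewrite H1 /=; move/negP; case; apply/allP.
have [Hsu [Huu _]] := I2 u; have [Hsv [Huv _]] := I2 v.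
have Hsub : {subset map snd (kNN st u) <= map snd (kNN st v)}.
  by move=> t /mapP[e He ->]; have [p Hp _] := Hin e He; rewrite -[e.2]/((p, e.2).2) map_f.
have Hle : (size (map snd (kNN st v)) <= size (map snd (kNN st u)))%N.
  by rewrite !size_map; apply: leq_trans Hsv Hf.
have [Hsz Heq] := uniq_min_size Huu Hsub Hle.
have Hfv : full st v by rewrite /full -(size_map snd) -Hsz size_map.
move: E; rewrite Hfv /=; move/negP; case; apply/allP => e' He'.
have : e'.2 \in map snd (kNN st u) by rewrite Heq map_f.
case/mapP => e He Ee; have [p Hp Hle2] := Hin e He.
have -> : e' = (p, e.2) by apply: uniq_snd Huv He' Hp _; rewrite Ee.
exact: Hle2.
Unshelve. all: by [].
Qed.

Lemma goodF_walk s p : s \in L -> path adj s p ->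
  goodF s (last s p) (walk_weight w s p).
Proof.
case: Hinv => [[I1 I2 I3 I4 I5] [I6 I7 I8 I9]] sL.
elim/last_ind: p => [|p y IH]; first by move=> _; apply: goodF_of; apply: I7.
rewrite rcons_path => /andP[Hp Ha]; rewrite last_rcons walk_weight_rcons.
exact: goodF_ext (IH Hp) Ha.
Qed.

Lemma goodF_is_walk s v p : s \in L -> is_walk adj s v p ->
  goodF s v (walk_weight w s p).
Proof. by move=> sL /andP[Hp /eqP <-]; apply: goodF_walk. Qed.

Lemma final_correct v : knn_correct adj w L k v (kNN st v).
Proof.
case: Hinv => [[I1 I2 I3 I4 I5] [I6 I7 I8 I9]].
have [Hsz [Hu Hso]] := I2 v.
have Hmem : forall x, x \in kNN st v -> x.2 \in Lcomp adj L v /\ is_dist adj w x.2 v x.1.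
  move=> x Hx; have [xL [p Hp Wp]] := I5 _ _ Hx.
  split.
    rewrite inE xL /=; apply/connectP; exists p; case/andP: Hp => // _ /eqP ->.
    by [].
  split; first by exists p.
  move=> p' Hp'; case: (goodF_is_walk xL Hp') => [[q Hq Hle]|[_ H]]; last exact: H.
  by have -> : x = (q, x.2) by apply: uniq_snd Hu Hx Hq _.
have H2 : (size (kNN st v) <= #|Lcomp adj L v|)%N.
  rewrite -(size_map snd) cardE; apply: uniq_leq_size => // t /mapP[x Hx ->].
  by rewrite mem_enum; case: (Hmem x Hx).
have H3 : (size (kNN st v) < k)%N -> (#|Lcomp adj L v| <= size (kNN st v))%N.
  move=> Hlt; rewrite -(size_map snd); apply: leq_trans (card_size _).
  apply: subset_leq_card; apply/subsetP => t; rewrite inE => /andP[tL /connectP[p Hp Hl]].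
  have : is_walk adj t v p by rewrite /is_walk Hp Hl eqxx.
  move/(goodF_is_walk tL) => [[q Hq _]|[Hf _]].
    by rewrite -[t]/((q, t).2) map_f.
  by move: Hf; rewrite /full leqNgt Hlt.
split => //.
- case: (ltnP (size (kNN st v)) k) => Hk; [have := H3 Hk|]; lia.
- move=> s d sC sN [[p Hp Wp] _] x Hx.
  have sL : s \in L by move: sC; rewrite inE => /andP[].
  case: (goodF_is_walk sL Hp) => [[q Hq _]|[_ H]]; last by rewrite -Wp; apply: H.
  by move: sN; rewrite -[s]/((q, s).2) map_f.
Qed.

End Final.

End Proof.

Theorem theoremB1 (V : finType) (R : realType) (adj : rel V)
    (w : V -> V -> R) (L : {set V}) (k : nat) :
  symmetric adj ->
  (forall x y, adj x y -> w x y = w y x) ->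
  (forall x y, adj x y -> 0 <= w x y) ->
  (0 < k)%N ->
  (* (1) every run of Algorithm 1 stops after finitely many steps *)
  (~ exists f : nat -> state V R,
       f 0%N = init R L /\ forall n, step adj w k (f n) (f n.+1)) /\
  (* (2) when it stops, the output lists are correct *)
  (forall st : state V R, reachable adj w L k st -> queue_empty st ->
     forall v, knn_correct adj w L k v (kNN st v)).
Proof.
move=> _ _ Hw _; split.
  by case=> f [H0 Hs]; apply: (no_infinite Hw H0 Hs).
move=> st Hr He v; have Hi := reach_inv Hw Hr.
exact: (final_correct Hi He).
Qed.
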